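(* Let $A$ be a $3$-dimensional zeropotent algebra over a field $K$ with $\mathrm{char}(K)\neq2$ whose structural matrix has rank at least $2$. Then every weak multiplier of $A$ is a scalar multiplication $S_a:x\mapsto ax$ for some $a\in K$; that is, $M(A)=M'(A)=LM(A)=LM'(A)=\{S_a: a\in K\}$.
   Context: $A$ is zeropotent if $x^2=0$ for all $x\in A$. Given a basis $\{e,f,g\}$, write $fg=a_{11}e+a_{12}f+a_{13}g$, $ge=a_{21}e+a_{22}f+a_{23}g$, $ef=a_{31}e+a_{32}f+a_{33}g$; the structural matrix is $(a_{ij})$ (rank $\ge 2$ means at least two of $fg,ge,ef$ are linearly independent). A map $T:A\to A$ (not assumed linear) is a weak multiplier if $xT(y)=T(x)y$ for all $x,y$, a multiplier if $xT(y)=T(xy)=T(x)y$ for all $x,y$; $M(A)$, $M'(A)$ are the sets of multipliers and weak multipliers and $LM(A)$, $LM'(A)$ their linear elements. *)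

(* Defs.v *)
From HB Require Import structures.
From mathcomp Require Import all_boot all_order all_algebra.
Set Implicit Arguments. Unset Strict Implicit. Unset Printing Implicit Defensive.
Import GRing.Theory.
Local Open Scope ring_scope.

Section Defs.
Variables (K : fieldType) (V : vectType K).

Definition bilinear_mul (mul : V -> V -> V) : Prop :=
  (forall (a : K) (x y z : V), mul (a *: x + y) z = a *: mul x z + mul y z) /\
  (forall (a : K) (x y z : V), mul z (a *: x + y) = a *: mul z x + mul z y).

Definition zeropotent (mul : V -> V -> V) : Prop := forall x : V, mul x x = 0.

Definition struct_mx (mul : V -> V -> V) (e f g : V) : 'M[K]_3 :=
  let b := [tuple e; f; g] in
  let p := [tuple mul f g; mul g e; mul e f] in
  \matrix_(i < 3, j < 3) coord b j (tnth p i).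

(* Maps A -> A, not assumed linear. *)
Definition weak_multiplier (mul : V -> V -> V) (T : V -> V) : Prop :=
  forall x y : V, mul x (T y) = mul (T x) y.

Definition multiplier (mul : V -> V -> V) (T : V -> V) : Prop :=
  forall x y : V, mul x (T y) = T (mul x y) /\ T (mul x y) = mul (T x) y.

Definition linear_map (T : V -> V) : Prop :=
  forall (a : K) (x y : V), T (a *: x + y) = a *: T x + T y.

Definition scalar_map (a : K) : V -> V := fun x => a *: x.

End Defs.

(* Main.v *)
Require Import Defs.
From HB Require Import structures.
From mathcomp Require Import all_boot all_order all_algebra.
From mathcomp Require Import ring zify.
From Stdlib Require Import FunctionalExtensionality.
Import GRing.Theory.
Set Implicit Arguments. Unset Strict Implicit.
Local Open Scope ring_scope.

Section Alg.
Variables (K : fieldType) (V : vectType K) (mul : V -> V -> V).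
Hypothesis Hb : bilinear_mul mul.
Hypothesis Hz : zeropotent mul.

Lemma bmulDl x y z : mul (x + y) z = mul x z + mul y z.
Proof. by have := Hb.1 1 x y z; rewrite !scale1r. Qed.
Lemma bmulDr x y z : mul z (x + y) = mul z x + mul z y.
Proof. by have := Hb.2 1 x y z; rewrite !scale1r. Qed.
Lemma bmul0l z : mul 0 z = 0.
Proof.
have := bmulDl 0 0 z; rewrite addr0 => h.
by apply: (@addrI _ (mul 0 z)); rewrite -h addr0.
Qed.
Lemma bmul0r z : mul z 0 = 0.
Proof.
have := bmulDr 0 0 z; rewrite addr0 => h.
by apply: (@addrI _ (mul z 0)); rewrite -h addr0.
Qed.
Lemma bmulZl a x z : mul (a *: x) z = a *: mul x z.
Proof. by have := Hb.1 a x 0 z; rewrite addr0 bmul0l addr0. Qed.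
Lemma bmulZr a x z : mul z (a *: x) = a *: mul z x.
Proof. by have := Hb.2 a x 0 z; rewrite addr0 bmul0r addr0. Qed.
Lemma bmulC x y : mul y x = - mul x y.
Proof.
have := Hz (x + y); rewrite bmulDl !bmulDr !Hz add0r addr0 => /eqP.
by rewrite addr_eq0 => /eqP ->; rewrite opprK.
Qed.

Definition phi (u1 u2 u3 : V) (a b c : K) := a *: u1 + b *: u2 + c *: u3.

Lemma phiD u1 u2 u3 a b c a' b' c' :
  phi u1 u2 u3 a b c + phi u1 u2 u3 a' b' c' = phi u1 u2 u3 (a + a') (b + b') (c + c').
Proof.
rewrite /phi !scalerDl.
by rewrite [LHS]addrACA [X in X + _ = _]addrACA.
Qed.
Lemma phiZ u1 u2 u3 k a b c :
  k *: phi u1 u2 u3 a b c = phi u1 u2 u3 (k * a) (k * b) (k * c).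
Proof. by rewrite /phi !scalerDr !scalerA. Qed.
Lemma phiB u1 u2 u3 a b c a' b' c' :
  phi u1 u2 u3 a b c - phi u1 u2 u3 a' b' c' = phi u1 u2 u3 (a - a') (b - b') (c - c').
Proof.
rewrite -scaleN1r phiZ phiD; congr phi; ring.
Qed.

Lemma collect (u1 u2 u3 ee ef eg fe ff fg ge gf gg : V) x1 x2 x3 y1 y2 y3 :
  ee = 0 -> ff = 0 -> gg = 0 -> fe = - ef -> eg = - ge -> gf = - fg ->
  fg = u1 -> ge = u2 -> ef = u3 ->
  x1 *: (y1 *: ee) + x1 *: (y2 *: ef) + x1 *: (y3 *: eg) +
  (x2 *: (y1 *: fe) + x2 *: (y2 *: ff) + x2 *: (y3 *: fg)) +
  (x3 *: (y1 *: ge) + x3 *: (y2 *: gf) + x3 *: (y3 *: gg))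
  = phi u1 u2 u3 (x2 * y3 - x3 * y2) (x3 * y1 - x1 * y3) (x1 * y2 - x2 * y1).
Proof.
move=> -> -> -> -> -> -> -> -> ->.
set P := phi u1 u2 u3.
have E0 : (0 : V) = P 0 0 0 by rewrite /P /phi !scale0r !addr0.
have E1 : u1 = P 1 0 0 by rewrite /P /phi scale1r !scale0r !addr0.
have E2 : u2 = P 0 1 0 by rewrite /P /phi scale1r !scale0r add0r addr0.
have E3 : u3 = P 0 0 1 by rewrite /P /phi scale1r !scale0r !add0r.
have EN a b c : - P a b c = P (-a) (-b) (-c).
  by rewrite /P -scaleN1r phiZ; congr phi; ring.
have EZ k a b c : k *: P a b c = P (k*a) (k*b) (k*c) by exact: phiZ.
have ED a b c a' b' c' : P a b c + P a' b' c' = P (a + a') (b + b') (c + c') by exact: phiD.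
rewrite E0 E1 E2 E3 !EN !EZ !ED.
rewrite /P; congr phi; ring.
Qed.

Lemma mulE e f g x1 x2 x3 y1 y2 y3 :
  mul (phi e f g x1 x2 x3) (phi e f g y1 y2 y3)
  = phi (mul f g) (mul g e) (mul e f) (x2 * y3 - x3 * y2) (x3 * y1 - x1 * y3) (x1 * y2 - x2 * y1).
Proof.
rewrite /phi !bmulDl !bmulDr !bmulZl !bmulZr -/(phi _ _ _ _ _ _).
apply: collect => //; rewrite ?Hz //; exact: bmulC.
Qed.


Definition rel (u1 u2 u3 : V) := exists p q : K, forall a b c,
  phi u1 u2 u3 a b c = 0 -> a = - (c * p) /\ b = - (c * q).

Lemma linE (k x y z w : K) : k != 0 -> x = y -> k * (z - w) = x - y -> z = w.
Proof.
move=> hk -> h; apply/eqP; rewrite -subr_eq0.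
by move: h; rewrite subrr => /eqP; rewrite mulf_eq0 (negPf hk).
Qed.

Ltac lin E k := first
  [ apply: (@linE k _ _ _ _ _ E); [by rewrite ?oppr_eq0 ?oner_eq0 | ring]
  | apply: (@linE (-k) _ _ _ _ _ E); [by rewrite ?oppr_eq0 ?oner_eq0 | ring] ].

Lemma core e f g T :
  (forall x, exists a b c, x = phi e f g a b c) ->
  rel (mul f g) (mul g e) (mul e f) -> (2 : K) != 0 ->
  weak_multiplier mul T -> exists t, T = scalar_map t.
Proof.
move=> Hs [p [q Hr]] h2 W.
have R x y xa xb xc ya yb yc ta tb tc sa sb sc :
    x = phi e f g xa xb xc -> y = phi e f g ya yb yc ->
    T x = phi e f g ta tb tc -> T y = phi e f g sa sb sc ->
    (xb * sc - xc * sb) - (tb * yc - tc * yb) =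
      - (((xa * sb - xb * sa) - (ta * yb - tb * ya)) * p) /\
    (xc * sa - xa * sc) - (tc * ya - ta * yc) =
      - (((xa * sb - xb * sa) - (ta * yb - tb * ya)) * q).
  move=> hx hy htx hty; apply: Hr; rewrite -phiB -!mulE -hx -hy -htx -hty.
  by rewrite W subrr.
have Ee : e = phi e f g 1 0 0 by rewrite /phi scale1r !scale0r !addr0.
have Ef : f = phi e f g 0 1 0 by rewrite /phi scale1r !scale0r add0r addr0.
have Eg : g = phi e f g 0 0 1 by rewrite /phi scale1r !scale0r !add0r.
have [t11 [t21 [t31 Te]]] := Hs (T e).
have [t12 [t22 [t32 Tf]]] := Hs (T f).
have [t13 [t23 [t33 Tg]]] := Hs (T g).
have [E1a E1b] := R _ _ _ _ _ _ _ _ _ _ _ _ _ _ Ee Ee Te Te.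
have [E2a E2b] := R _ _ _ _ _ _ _ _ _ _ _ _ _ _ Ef Ef Tf Tf.
have [E3a E3b] := R _ _ _ _ _ _ _ _ _ _ _ _ _ _ Eg Eg Tg Tg.
have [E4a E4b] := R _ _ _ _ _ _ _ _ _ _ _ _ _ _ Ee Ef Te Tf.
have [E5a E5b] := R _ _ _ _ _ _ _ _ _ _ _ _ _ _ Ee Eg Te Tg.
have [E6a E6b] := R _ _ _ _ _ _ _ _ _ _ _ _ _ _ Ef Eg Tf Tg.
have h23 : t23 = 0 by lin E3a (2 : K).
have h13 : t13 = 0 by lin E3b (2 : K).
subst t23 t13.
have h21 : t21 = 0 by lin E5a (1 : K).
have h33 : t33 = t11 by lin E5b (1 : K).
subst t21 t33.
have h22 : t22 = t11 by lin E6a (1 : K).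
have h12 : t12 = 0 by lin E6b (1 : K).
subst t22 t12.
have h31 : t31 = 0 by lin E1b (2 : K).
have h32 : t32 = 0 by lin E2a (2 : K).
subst t31 t32.
exists t11; apply: functional_extensionality => x.
have [x1 [x2 [x3 Ex]]] := Hs x.
have [y1 [y2 [y3 Tx]]] := Hs (T x).
have [F1a F1b] := R _ _ _ _ _ _ _ _ _ _ _ _ _ _ Ee Ex Te Tx.
have [F2a F2b] := R _ _ _ _ _ _ _ _ _ _ _ _ _ _ Ef Ex Tf Tx.
have [F3a F3b] := R _ _ _ _ _ _ _ _ _ _ _ _ _ _ Eg Ex Tg Tx.
have k2 : y2 = t11 * x2 by lin F3a (1 : K).
have k1 : y1 = t11 * x1 by lin F3b (1 : K).
subst y1 y2.
have k3 : y3 = t11 * x3 by lin F1b (1 : K).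
by rewrite Tx k3 /scalar_map Ex phiZ.
Qed.

End Alg.

Unset Implicit Arguments.


Definition o0 : 'I_3 := @Ordinal 3 0 isT.
Definition o1 : 'I_3 := @Ordinal 3 1 isT.
Definition o2 : 'I_3 := @Ordinal 3 2 isT.

Lemma kern (K : fieldType) (V : vectType K) (mul : V -> V -> V) (e f g : V) :
  (2 <= \rank (struct_mx mul e f g))%N ->
  exists k0 k1 k2 : K, (k0 != 0 \/ k1 != 0 \/ k2 != 0) /\
   forall a b c, phi (mul f g) (mul g e) (mul e f) a b c = 0 ->
     exists l, a = l * k0 /\ b = l * k1 /\ c = l * k2.
Proof.
set M := struct_mx mul e f g => hr.
have Hker a b c : phi (mul f g) (mul g e) (mul e f) a b c = 0 ->
    (\row_(i < 3) [:: a; b; c]`_i <= kermx M)%MS.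
  move=> H; rewrite sub_kermx; apply/eqP/rowP => j; rewrite !mxE.
  rewrite !big_ord_recr big_ord0 /= !mxE /=.
  rewrite add0r !(tnth_nth 0) /=.
  have := congr1 (coord [tuple e; f; g] j) H.
  by rewrite /phi !linearD !linearZ linear0 /=.

  have hN : (\rank (kermx M) <= 1)%N by rewrite mxrank_ker; lia.
have ent a b c (i : 'I_3) : (\row_(i < 3) [:: a; b; c]`_i) 0 i = [:: a; b; c]`_i by rewrite mxE.
case: (eqVneq (kermx M) 0) => [N0 | Nn0].
  exists 0, 0, 1; split; first by right; right; exact: oner_neq0.
  move=> a b c /Hker; rewrite N0 submx0 => /eqP/rowP v0.
  have := v0 o0; have := v0 o1; have := v0 o2; rewrite !ent !mxE /= => -> -> ->.
  by exists 0; rewrite !mul0r; do !split.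
set v0 := nz_row (kermx M).
have v0n : v0 != 0 by rewrite nz_row_eq0.
have sub : (kermx M <= v0)%MS.
  have [le1 eqiff] := mxrank_leqif_sup (nz_row_sub (kermx M)).
  by rewrite -eqiff eqn_leq le1 /= rank_rV v0n.
exists (v0 0 o0), (v0 0 o1), (v0 0 o2); split.
  have [z0|] := eqVneq (v0 0 o0) 0; last by left.
  have [z1|] := eqVneq (v0 0 o1) 0; last by right; left.
  have [z2|] := eqVneq (v0 0 o2) 0; last by right; right.
  move: v0n; suff -> : v0 = 0 by rewrite eqxx.
  apply/rowP => i; rewrite mxE; case: i => [[|[|[|i]]] hi] //.
  - by rewrite -z0; congr (v0 _ _); apply: val_inj.
  - by rewrite -z1; congr (v0 _ _); apply: val_inj.
  - by rewrite -z2; congr (v0 _ _); apply: val_inj.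
move=> a b c /Hker hv; have /sub_rVP [l hl] := submx_trans hv sub.
exists l.
have := congr1 (fun m : 'M[K]_(1,3) => m 0 o0) hl; have := congr1 (fun m : 'M[K]_(1,3) => m 0 o1) hl;
  have := congr1 (fun m : 'M[K]_(1,3) => m 0 o2) hl; rewrite /= !ent !mxE /= => -> -> ->.
by [].
Qed.



Lemma main_weak (K : fieldType) (V : vectType K) (mul : V -> V -> V) :
  ~~ (2%N \in [pchar K]) ->
  bilinear_mul mul ->
  zeropotent mul ->
  (exists e f g : V,
      basis_of fullv [:: e; f; g] /\ (2 <= \rank (struct_mx mul e f g))%N) ->
  forall T, weak_multiplier mul T -> exists a : K, T = scalar_map a.
Proof.
move=> hc Hb Hz [e [f [g [hb hr]]]] T W.
have h2 : (2 : K) != 0.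
  apply: contraNneq hc => h; rewrite inE /= h eqxx.
  done.
have Hs x : exists a b c, x = phi e f g a b c.
  rewrite (coord_basis hb (memvf x)) !big_ord_recr big_ord0 /= add0r.
  by do 3 eexists; rewrite /phi.
have [k0 [k1 [k2 [hk KP]]]] := @kern _ _ mul e f g hr.
have rot u1 u2 u3 a b c : phi u2 u3 u1 a b c = phi u1 u2 u3 c a b.
  by rewrite /phi addrC addrA.
case: hk => [hk0 | [hk1 | hk2]].
- apply: (core Hb Hz (e := f) (f := g) (g := e)) => //.
  + move=> x; have [a [b [c ->]]] := Hs x; exists b, c, a; by rewrite rot.
  + exists (- (k1 / k0)), (- (k2 / k0)) => a b c; rewrite rot => /KP [l [-> [-> ->]]].
    by split; field.
- apply: (core Hb Hz (e := g) (f := e) (g := f)) => //.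
  + move=> x; have [a [b [c ->]]] := Hs x; exists c, a, b; by rewrite -rot.
  + exists (- (k2 / k1)), (- (k0 / k1)) => a b c; rewrite -rot => /KP [l [-> [-> ->]]].
    by split; field.
- apply: (core Hb Hz (e := e) (f := f) (g := g)) => //.
  exists (- (k0 / k2)), (- (k1 / k2)) => a b c /KP [l [-> [-> ->]]].
  by split; field.
Qed.

Theorem theorem7p2 (K : fieldType) (V : vectType K) (mul : V -> V -> V) :
  ~~ (2%N \in [pchar K]) ->
  \dim (fullv : {vspace V}) = 3%N ->
  bilinear_mul mul ->
  zeropotent mul ->
  (exists e f g : V,
      basis_of fullv [:: e; f; g] /\ (2 <= \rank (struct_mx mul e f g))%N) ->
  (forall T : V -> V, multiplier mul T <-> exists a : K, T = scalar_map a) /\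
  (forall T : V -> V, weak_multiplier mul T <-> exists a : K, T = scalar_map a) /\
  (forall T : V -> V, (multiplier mul T /\ linear_map T) <-> exists a : K, T = scalar_map a) /\
  (forall T : V -> V, (weak_multiplier mul T /\ linear_map T) <-> exists a : K, T = scalar_map a).
Proof.
move=> hc _ Hb Hz Hex.
have MW := @main_weak K V mul hc Hb Hz Hex.
have SM (a : K) : multiplier mul (scalar_map a) /\ linear_map (scalar_map (V := V) a).
  split.
    move=> x y; rewrite /scalar_map.
    by rewrite (@bmulZr _ _ _ Hb) (@bmulZl _ _ _ Hb).
  by move=> b x y; rewrite /scalar_map scalerDr !scalerA mulrC.
have MtoW T : multiplier mul T -> weak_multiplier mul T.
  by move=> H x y; rewrite (H x y).1 (H x y).2.
split; [|split; [|split]] => T; split.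
- by move/MtoW/MW.
- move=> [a ->]; have [m l] := SM a; exact: m.
- exact: MW.
- move=> [a ->]; have [m l] := SM a; exact: MtoW.
- by move=> [/MtoW/MW].
- by move=> [a ->]; exact: SM.
- by move=> [/MW].
- move=> [a ->]; have [m l] := SM a; split => //; exact: MtoW.
Qed.
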